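(* Let $l\in\mathbb{N}$, let $\mathcal{A},\mathcal{B}_1,\mathcal{B}_2,\mathcal{C}$ be finite sets, and let $p_{AB_1B_2C}=p_Ap_{B_1|A}p_{B_2|A}p_{C|B_1B_2}$ be a pmf on $\mathcal{A}\times\mathcal{B}_1\times\mathcal{B}_2\times\mathcal{C}$ such that $p_A$ is a type of sequences in $\mathcal{A}^l$. Let $u^l:[M_u]\to\mathcal{A}^l$ be a map such that $u^l(m)$ has type $p_A$ for every $m$, and let $(M_1,M_2)\in[M_u]\times[M_u]$ be random variables with an arbitrary joint pmf. Suppose $(A_1^l,A_2^l,B_1^l,B_2^l,C^l)$ has pmf $$p(a_1^l,a_2^l,b_1^l,b_2^l,c^l)=\Big[\sum_{m_1,m_2}P(M_1=m_1,M_2=m_2)\mathbf{1}\{u^l(m_1)=a_1^l,u^l(m_2)=a_2^l\}\Big]\prod_{i=1}^lp_{B_1|A}(b_{1i}|a_{1i})p_{B_2|A}(b_{2i}|a_{2i})p_{C|B_1B_2}(c_i|b_{1i},b_{2i}),$$ and let $I\in\{1,\dots,l\}$ be uniformly distributed and independent of $(A_1^l,A_2^l,B_1^l,B_2^l,C^l)$. Then for all $x,y_1,y_2,z$, $$P(A_{1I}=x,A_{2I}=x,B_{1I}=y_1,B_{2I}=y_2,C_I=z\mid A_1^l=A_2^l)=p_{AB_1B_2C}(x,y_1,y_2,z),$$ provided $P(A_1^l=A_2^l)>0$.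
   Context: A pmf $p_A$ on $\mathcal{A}$ is a type of sequences in $\mathcal{A}^l$ if $lp_A(a)$ is an integer for all $a$; a sequence $a^l$ has type $p_A$ if $\frac1l|\{i:a_i=a\}|=p_A(a)$ for all $a$. $A_{1I}$ denotes the $I$-th component of $A_1^l$, etc. *)

(* Defs.v *)
From HB Require Import structures.
From mathcomp Require Import all_boot all_order all_algebra.
Set Implicit Arguments. Unset Strict Implicit. Unset Printing Implicit Defensive.
Import Order.TTheory GRing.Theory Num.Theory.
Local Open Scope ring_scope.

Section Defs.
Variable R : realFieldType.

Definition is_pmf (T : finType) (p : T -> R) : Prop :=
  (forall t, 0 <= p t) /\ \sum_(t : T) p t = 1.

Definition is_cond_pmf (S T : finType) (p : S -> T -> R) : Prop :=
  forall s, is_pmf (p s).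

Definition is_type (A : finType) (l : nat) (pA : A -> R) : Prop :=
  forall a, exists k : int, l%:R * pA a = k%:~R.

Definition has_type (A : finType) (l : nat) (s : {ffun 'I_l -> A}) (pA : A -> R)
  : Prop :=
  forall a, (l%:R)^-1 * (#|[set i | s i == a]|)%:R = pA a.

Definition seq_pmf (A B1 B2 C : finType) (l Mu : nat)
  (pB1 : A -> B1 -> R) (pB2 : A -> B2 -> R) (pC : B1 -> B2 -> C -> R)
  (u : 'I_Mu -> {ffun 'I_l -> A}) (PM : 'I_Mu * 'I_Mu -> R)
  (a1 a2 : {ffun 'I_l -> A}) (b1 : {ffun 'I_l -> B1}) (b2 : {ffun 'I_l -> B2})
  (c : {ffun 'I_l -> C}) : R :=
  (\sum_(m : 'I_Mu * 'I_Mu) PM m * ((u m.1 == a1) && (u m.2 == a2))%:R) *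
  \prod_(i < l) (pB1 (a1 i) (b1 i) * pB2 (a2 i) (b2 i) * pC (b1 i) (b2 i) (c i)).

(* probability of an event E on (I, A_1^l, A_2^l, B_1^l, B_2^l, C^l), where
   I is uniform on 'I_l (i.e. {1,...,l}, 0-based) and independent of the rest *)
Definition probI (A B1 B2 C : finType) (l Mu : nat)
  (pB1 : A -> B1 -> R) (pB2 : A -> B2 -> R) (pC : B1 -> B2 -> C -> R)
  (u : 'I_Mu -> {ffun 'I_l -> A}) (PM : 'I_Mu * 'I_Mu -> R)
  (E : 'I_l -> {ffun 'I_l -> A} -> {ffun 'I_l -> A} -> {ffun 'I_l -> B1} ->
       {ffun 'I_l -> B2} -> {ffun 'I_l -> C} -> bool) : R :=
  \sum_(i : 'I_l) \sum_(a1 : {ffun 'I_l -> A}) \sum_(a2 : {ffun 'I_l -> A})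
  \sum_(b1 : {ffun 'I_l -> B1}) \sum_(b2 : {ffun 'I_l -> B2})
  \sum_(c : {ffun 'I_l -> C})
    (l%:R)^-1 * seq_pmf pB1 pB2 pC u PM a1 a2 b1 b2 c * (E i a1 a2 b1 b2 c)%:R.

End Defs.

(* Main.v *)
Require Import Defs.
From HB Require Import structures.
From mathcomp Require Import all_boot all_order all_algebra.
From mathcomp Require Import ring.
Import Order.TTheory GRing.Theory Num.Theory.
Local Open Scope ring_scope.

Section Helpers.
Variable R : realFieldType.

Lemma sum_pick (T : finType) (y : T) (F : T -> R) :
  (forall t, t != y -> F t = 0) -> \sum_t F t = F y.
Proof.
move=> H; rewrite (bigD1 y) //= big1 ?addr0 // => t /H; done.
Qed.

Lemma triple_distr (I B1 B2 C : finType) (H : I -> B1 -> B2 -> C -> R) :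
  \sum_(b1 : {ffun I -> B1}) \sum_(b2 : {ffun I -> B2}) \sum_(c : {ffun I -> C})
     \prod_j H j (b1 j) (b2 j) (c j)
  = \prod_j \sum_t1 \sum_t2 \sum_t3 H j t1 t2 t3.
Proof.
rewrite bigA_distr_bigA; apply: eq_bigr => b1 _.
rewrite bigA_distr_bigA; apply: eq_bigr => b2 _.
by rewrite bigA_distr_bigA.
Qed.

End Helpers.
Arguments sum_pick {R T} y F.
Arguments triple_distr {R I B1 B2 C} H.

Theorem lemma7 (R : realFieldType) (l : nat) (A B1 B2 C : finType)
  (pA : A -> R) (pB1 : A -> B1 -> R) (pB2 : A -> B2 -> R)
  (pC : B1 -> B2 -> C -> R) (Mu : nat) (u : 'I_Mu -> {ffun 'I_l -> A})
  (PM : 'I_Mu * 'I_Mu -> R) :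
  (0 < l)%N ->
  is_pmf pA -> is_cond_pmf pB1 -> is_cond_pmf pB2 -> is_cond_pmf (fun s : B1 * B2 => pC s.1 s.2) ->
  is_type l pA ->
  (forall m, has_type (u m) pA) ->
  is_pmf PM ->
  0 < probI pB1 pB2 pC u PM (fun _ a1 a2 _ _ _ => a1 == a2) ->
  forall (x : A) (y1 : B1) (y2 : B2) (z : C),
    probI pB1 pB2 pC u PM
      (fun i a1 a2 b1 b2 c =>
         [&& a1 i == x, a2 i == x, b1 i == y1, b2 i == y2, c i == z & a1 == a2])
    / probI pB1 pB2 pC u PM (fun _ a1 a2 _ _ _ => a1 == a2)
    = pA x * pB1 x y1 * pB2 x y2 * pC y1 y2 z.
Proof.
move=> l0 _ HB1 HB2 HC _ Hty _ Hpos x y1 y2 z.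
set W := fun a1 a2 : {ffun 'I_l -> A} =>
  \sum_(m : 'I_Mu * 'I_Mu) PM m * ((u m.1 == a1) && (u m.2 == a2))%:R.
set Pr := fun (a1 a2 : {ffun 'I_l -> A}) (b1 : {ffun 'I_l -> B1})
   (b2 : {ffun 'I_l -> B2}) (c : {ffun 'I_l -> C}) =>
   \prod_(i < l) (pB1 (a1 i) (b1 i) * pB2 (a2 i) (b2 i) * pC (b1 i) (b2 i) (c i)).
have Hone : forall a a', \sum_t1 \sum_t2 \sum_t3
     (pB1 a t1 * pB2 a' t2 * pC t1 t2 t3) = 1.
  move=> a a'; rewrite -(proj2 (HB1 a)); apply: eq_bigr => t1 _.
  rewrite -[RHS]mulr1 -(proj2 (HB2 a')) mulr_sumr; apply: eq_bigr => t2 _.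
  rewrite -[RHS]mulr1 -(proj2 (HC (t1, t2))) mulr_sumr; apply: eq_bigr => t3 _.
  by [].
have L2 : forall a1 a2, \sum_b1 \sum_b2 \sum_c Pr a1 a2 b1 b2 c = 1.
  move=> a1 a2; rewrite /Pr (triple_distr
    (fun j t1 t2 t3 => pB1 (a1 j) t1 * pB2 (a2 j) t2 * pC t1 t2 t3)).
  by rewrite big1 // => j _; rewrite Hone.
have L1 : forall a1 a2 i, \sum_b1 \sum_b2 \sum_c
    (Pr a1 a2 b1 b2 c * [&& b1 i == y1, b2 i == y2 & c i == z]%:R)
    = pB1 (a1 i) y1 * pB2 (a2 i) y2 * pC y1 y2 z.
  move=> a1 a2 i.
  pose H := fun j t1 t2 t3 => pB1 (a1 j) t1 * pB2 (a2 j) t2 * pC t1 t2 t3 *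
     ((j != i) || [&& t1 == y1, t2 == y2 & t3 == z])%:R.
  have key : forall b1 b2 c, Pr a1 a2 b1 b2 c *
       [&& b1 i == y1, b2 i == y2 & c i == z]%:R
       = \prod_j H j (b1 j) (b2 j) (c j).
    move=> b1 b2 c; rewrite /Pr (bigD1 i) //= [in RHS](bigD1 i) //= /H eqxx /=.
    rewrite mulrAC; congr (_ * _); apply: eq_bigr => j ji; by rewrite ji mulr1.
  transitivity (\sum_(b1 : {ffun 'I_l -> B1}) \sum_(b2 : {ffun 'I_l -> B2})
      \sum_(c : {ffun 'I_l -> C}) \prod_j H j (b1 j) (b2 j) (c j)).
    by apply: eq_bigr => b1 _; apply: eq_bigr => b2 _; apply: eq_bigr => c _; apply: key.
  rewrite triple_distr (bigD1 i) //= [X in _ * X]big1 ?mulr1; last first.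
    move=> j ji; rewrite -(Hone (a1 j) (a2 j)).
    apply: eq_bigr => t1 _; apply: eq_bigr => t2 _; apply: eq_bigr => t3 _.
    by rewrite /H ji mulr1.
  rewrite (sum_pick y1); last first.
    move=> t1 t1n; apply: big1 => t2 _; apply: big1 => t3 _.
    by rewrite /H eqxx /= (negbTE t1n) mulr0.
  rewrite (sum_pick y2); last first.
    move=> t2 t2n; apply: big1 => t3 _.
    by rewrite /H eqxx /= (negbTE t2n) andbF mulr0.
  rewrite (sum_pick z); last first.
    by move=> t3 t3n; rewrite /H eqxx /= (negbTE t3n) !andbF mulr0.
  by rewrite /H !eqxx mulr1.
have ln0 : (l%:R : R) != 0 by rewrite pnatr_eq0 -lt0n.
set D := \sum_(a : {ffun 'I_l -> A}) W a a.
have pull : forall (k : R) (F : {ffun 'I_l -> B1} -> {ffun 'I_l -> B2} -> {ffun 'I_l -> C} -> R),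
   \sum_b1 \sum_b2 \sum_c (k * F b1 b2 c) = k * \sum_b1 \sum_b2 \sum_c F b1 b2 c.
  move=> k F; rewrite mulr_sumr; apply: eq_bigr => b1 _.
  rewrite mulr_sumr; apply: eq_bigr => b2 _; by rewrite mulr_sumr.
have Hden : probI pB1 pB2 pC u PM (fun _ a1 a2 _ _ _ => a1 == a2) = D.
  rewrite /probI.
  transitivity (\sum_(i : 'I_l) l%:R^-1 * D).
    apply: eq_bigr => i _; rewrite /D mulr_sumr; apply: eq_bigr => a1 _.
    rewrite (sum_pick a1); last first.
      move=> a2 a2n; apply: big1 => b1 _; apply: big1 => b2 _; apply: big1 => c _.
      by rewrite eq_sym (negbTE a2n) mulr0.
    transitivity (\sum_(b1 : {ffun 'I_l -> B1}) \sum_(b2 : {ffun 'I_l -> B2})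
      \sum_(c : {ffun 'I_l -> C}) ((l%:R^-1 * W a1 a1) * Pr a1 a1 b1 b2 c)).
      apply: eq_bigr => b1 _; apply: eq_bigr => b2 _; apply: eq_bigr => c _.
      by rewrite eqxx mulr1 /seq_pmf -!mulrA.
    by rewrite pull L2 mulr1.
  rewrite sumr_const card_ord -[X in X = _]mulr_natl; field; exact: ln0.
have cntE : forall (s : {ffun 'I_l -> A}),
    \sum_i ((s i == x)%:R : R) = (#|[set i | s i == x]|)%:R.
  move=> s; rewrite -sum1dep_card natr_sum big_mkcond /=.
  rewrite [RHS]big_mkcond; apply: eq_bigr => i _; by case: (s i == x).
have cnt : forall a1, W a1 a1 * \sum_i ((a1 i == x)%:R : R) = W a1 a1 * (l%:R * pA x).
  move=> a1; rewrite /W !mulr_suml; apply: eq_bigr => m _.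
  case: (eqVneq (u m.1) a1) => [<-|ne] /=; last by rewrite !mulr0 !mul0r.
  by rewrite cntE -(Hty m.1 x) [X in _ = _ * X]mulrA mulfV ?mul1r.
have Hnum : probI pB1 pB2 pC u PM
      (fun i a1 a2 b1 b2 c =>
         [&& a1 i == x, a2 i == x, b1 i == y1, b2 i == y2, c i == z & a1 == a2])
    = pA x * pB1 x y1 * pB2 x y2 * pC y1 y2 z * D.
  rewrite /probI.
  transitivity (\sum_(i : 'I_l) \sum_(a1 : {ffun 'I_l -> A})
      l%:R^-1 * W a1 a1 * (a1 i == x)%:R * (pB1 x y1 * pB2 x y2 * pC y1 y2 z)).
    apply: eq_bigr => i _; apply: eq_bigr => a1 _.
    rewrite (sum_pick a1); last first.
      move=> a2 a2n; apply: big1 => b1 _; apply: big1 => b2 _; apply: big1 => c _.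
      have ne : (a1 == a2) = false by rewrite eq_sym (negbTE a2n).
      by rewrite ne !andbF mulr0.
    case: (eqVneq (a1 i) x) => [Hx|Hx].
      transitivity (\sum_(b1 : {ffun 'I_l -> B1}) \sum_(b2 : {ffun 'I_l -> B2})
        \sum_(c : {ffun 'I_l -> C}) ((l%:R^-1 * W a1 a1) *
          (Pr a1 a1 b1 b2 c * [&& b1 i == y1, b2 i == y2 & c i == z]%:R))).
        apply: eq_bigr => b1 _; apply: eq_bigr => b2 _; apply: eq_bigr => c _.
        by rewrite !eqxx /= andbT /seq_pmf -!mulrA.
      by rewrite pull L1 Hx mulr1.
    rewrite mulr0 mul0r.
    apply: big1 => b1 _; apply: big1 => b2 _; apply: big1 => c _.
    by rewrite mulr0.
  rewrite exchange_big /=.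
  transitivity (\sum_(a1 : {ffun 'I_l -> A}) (l%:R^-1 * (pB1 x y1 * pB2 x y2 * pC y1 y2 z)) *
     (W a1 a1 * \sum_i ((a1 i == x)%:R : R))).
    apply: eq_bigr => a1 _; rewrite [RHS]mulrA [RHS]mulr_sumr; apply: eq_bigr => i _; ring.
  rewrite /D mulr_sumr; apply: eq_bigr => a1 _; rewrite cnt.
  field; exact: ln0.
have Dn : D != 0 by move: Hpos; rewrite Hden; exact: lt0r_neq0.
transitivity ((pA x * pB1 x y1 * pB2 x y2 * pC y1 y2 z * D) / D).
  by congr (_ / _); [exact: Hnum | exact: Hden].
by rewrite -mulrA mulfV ?mulr1.
Qed.
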